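(* Let $E\in\mathcal Q$ be a quasi-regular hexagon and let $P\notin\mathcal Q$ be a polyiamond with $\|P\|\ge\|E\|$. Then $p(P)>p(E)$ and $s(P)>s(E)$.
   Context: Faces are the closed triangular faces of the triangular lattice $\mathbb T^2$ in $\mathbb R^2$. A polyiamond $P$ is a finite nonempty union of faces that is connected through shared edges (two faces sharing only a vertex are not adjacent); faces not in $P$ are empty faces. Its area $\|P\|$ is the number of its faces; its edge-perimeter $p(P)$ is the number of edges of $\mathbb T^2$ separating a face of $P$ from an empty face; its site-perimeter $s(P)$ is the number of empty faces sharing at least one edge with a face of $P$. For integers $d\ge1$, $a,b,c\ge0$ with $a+b,b+c,c+a\le d$, $T^d_{a,b,c}$ is the polyiamond obtained from an equilateral triangle of side length $d$ with sides on lattice lines (the union of its $d^2$ faces) by removing the equilateral sub-triangles of side lengths $a,b,c$ at its three corners; its boundary is a (possibly degenerate) hexagon with side lengths, in cyclic order, $a,\ d-a-b,\ b,\ d-b-c,\ c,\ d-c-a$, its area is $d^2-a^2-b^2-c^2$ and its edge- and site-perimeter equal $3d-a-b-c$. Quasi-regular hexagons: for $r\ge1$ let $E(r)=T^{3r}_{r,r,r}$ (regular hexagon of side $r$), $E_{B_1}(r)=T^{3r}_{r-1,r,r}$, $E_{B_2}(r)=T^{3r+1}_{r,r,r+1}$, $E_{B_3}(r)=T^{3r+1}_{r,r,r}$, $E_{B_4}(r)=T^{3r+2}_{r,r+1,r+1}$, $E_{B_5}(r)=T^{3r+2}_{r,r,r+1}$. Their areas are $6r^2,\ 6r^2+2r-1,\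 6r^2+4r,\ 6r^2+6r+1,\ 6r^2+8r+2,\ 6r^2+10r+3$, and their edge-perimeters (equal to their site-perimeters) are $6r,6r+1,\dots,6r+5$. A quasi-regular hexagon is any image of one of these under a symmetry (translation, rotation, reflection) of $\mathbb T^2$; $\mathcal Q$ denotes the set of all quasi-regular hexagons. *)

(* Defs.v *)
From HB Require Import structures.
From mathcomp Require Import all_boot all_order all_algebra.
From mathcomp Require Import finmap.
Set Implicit Arguments. Unset Strict Implicit. Unset Printing Implicit Defensive.
Import Order.TTheory GRing.Theory Num.Theory.
Local Open Scope ring_scope.


(* Lattice coordinates: vertices of T^2 are u*e1 + v*e2 with (u,v) in Z^2,
   e1 = (1,0), e2 = (1/2, sqrt 3/2).
   Face (x, y, false) = "up" triangle with vertices (x,y),(x+1,y),(x,y+1).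
   Face (x, y, true)  = "down" triangle with vertices (x+1,y),(x,y+1),(x+1,y+1). *)
Definition face := (int * int * bool)%type.

Definition nbrs (f : face) : seq face :=
  let: (x, y, d) := f in
  if d then [:: (x, y, false); (x + 1, y, false); (x, y + 1, false)]
  else [:: (x, y, true); (x - 1, y, true); (x, y - 1, true)].

Definition adj : rel face := fun f g => g \in nbrs f.

Definition is_polyiamond (P : {fset face}) : Prop :=
  P != fset0%fset /\
  forall f g, f \in P -> g \in P ->
    exists s : seq face, all (fun h => h \in P) s /\ path adj f s /\ last f s = g.

Definition area (P : {fset face}) : nat := #|` P|%fset.

(* edge-perimeter: number of (face of P, empty neighbour) pairs, i.e. of
   lattice edges separating a face of P from an empty face. *)
Definition edge_perimeter (P : {fset face}) : nat :=
  (\sum_(f <- enum_fset P) count (fun g => g \notin P) (nbrs f))%N.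

Definition site_perimeter (P : {fset face}) : nat :=
  size (undup (flatten [seq [seq g <- nbrs f | g \notin P] | f <- enum_fset P])).

(* T^d_{a,b,c}: triangle {u>=0, v>=0, u+v<=d} with corner triangles of sides
   a (at (0,0)), b (at (d,0)), c (at (0,d)) removed. *)
Definition inT (d a b c : int) (f : face) : bool :=
  let: (x, y, dn) := f in
  if dn then [&& 0 <= x, 0 <= y, x + y + 2 <= d, a < x + y + 2, x < d - b & y < d - c]
  else [&& 0 <= x, 0 <= y, x + y + 1 <= d, a < x + y + 1, x < d - b & y < d - c].

Definition inQbase (r : int) (i : nat) (f : face) : bool :=
  match i with
  | 0 => inT (3 * r) r r r f
  | 1 => inT (3 * r) (r - 1) r r f
  | 2 => inT (3 * r + 1) r r (r + 1) f
  | 3 => inT (3 * r + 1) r r r f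
  | 4 => inT (3 * r + 2) r (r + 1) (r + 1) f
  | _ => inT (3 * r + 2) r r (r + 1) f
  end.

(* rotation by 60 degrees about the origin: (u,v) |-> (-v, u+v) *)
Definition rot60 (f : face) : face :=
  let: (x, y, dn) := f in
  if dn then (- y - 1, x + y + 1, false) else (- y - 1, x + y, true).
Definition refl (f : face) : face := let: (x, y, dn) := f in (y, x, dn).
Definition transl (tx ty : int) (f : face) : face :=
  let: (x, y, dn) := f in (x + tx, y + ty, dn).

Definition lat_sym (k : nat) (s : bool) (tx ty : int) (f : face) : face :=
  transl tx ty ((if s then refl else id) (iter k rot60 f)).

(* P is a quasi-regular hexagon: the image of a base one under a symmetry
   (equivalently, its preimage under the inverse symmetry). *)
Definition is_QR (P : {fset face}) : Prop :=
  exists (r : int) (i : nat) (k : nat) (s : bool) (tx ty : int),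
    1 <= r /\ (i < 6)%N /\ (k < 6)%N /\
    forall f : face, (f \in P) = inQbase r i (lat_sym k s tx ty f).

(* Main.v *)
Require Import Defs.
From HB Require Import structures.
From mathcomp Require Import all_boot all_order all_algebra.
From mathcomp Require Import finmap.
From mathcomp Require Import zify.
Set Implicit Arguments. Unset Strict Implicit. Unset Printing Implicit Defensive.
Import Order.TTheory GRing.Theory Num.Theory.
Local Open Scope fset_scope.
Local Open Scope ring_scope.


Definition fx (f : face) : int := f.1.1.
Definition fy (f : face) : int := f.1.2.
Definition fd (f : face) : int := if f.2 then 1 else 0.
Definition fz (f : face) : int := fx f + fy f + fd f.

Inductive dir := DX | DY | DZ.

Definition key (K : dir) (f : face) : int :=
  match K with DX => fx f | DY => fy f | DZ => fz f end.
Definition pos (K : dir) (f : face) : int :=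
  match K with DY => 2 * fx f + fd f | _ => 2 * fy f + fd f end.
Definition nxt (K : dir) (f : face) : face :=
  let: (x, y, d) := f in
  match K with
  | DY => if d then (x + 1, y, false) else (x, y, true)
  | DX => if d then (x, y + 1, false) else (x, y, true)
  | DZ => if d then (x, y + 1, false) else (x - 1, y, true)
  end.
Definition prv (K : dir) (f : face) : face :=
  let: (x, y, d) := f in
  match K with
  | DY => if d then (x, y, false) else (x - 1, y, true)
  | DX => if d then (x, y, false) else (x, y - 1, true)
  | DZ => if d then (x + 1, y, false) else (x, y - 1, true)
  end.

Ltac dface f := let x := fresh "x" in let y := fresh "y" in let d := fresh "d" in
  case: f => [[x y] d].

Lemma key_nxt K f : key K (nxt K f) = key K f.
Proof. dface f; case: K; case: d; rewrite /key /fz /fx /fy /fd /=; lia. Qed.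
Lemma key_prv K f : key K (prv K f) = key K f.
Proof. dface f; case: K; case: d; rewrite /key /fz /fx /fy /fd /=; lia. Qed.
Lemma pos_nxt K f : pos K (nxt K f) = pos K f + 1.
Proof. dface f; case: K; case: d; rewrite /pos /fx /fy /fd /=; lia. Qed.
Lemma pos_prv K f : pos K (prv K f) = pos K f - 1.
Proof. dface f; case: K; case: d; rewrite /pos /fx /fy /fd /=; lia. Qed.

Lemma key_pos_inj K f g : key K f = key K g -> pos K f = pos K g -> f = g.
Proof.
dface f; dface g; case: K; rewrite /key /pos /fz /fx /fy /fd /=;
 case: d; case: d0 => H1 H2; try lia; congr (_, _, _); lia.
Qed.

Lemma nxt_nbr K f : nxt K f \in nbrs f.
Proof. dface f; case: K; case: d; rewrite /= !inE eqxx ?orbT //. Qed.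
Lemma prv_nbr K f : prv K f \in nbrs f.
Proof. dface f; case: K; case: d; rewrite /= !inE eqxx ?orbT //. Qed.

Lemma key_nbr K f g : g \in nbrs f -> key K f - 1 <= key K g <= key K f + 1.
Proof.
dface f; case: d; rewrite /= !inE => /or3P [] /eqP ->;
  case: K; rewrite /key /fz /fx /fy /fd /=; lia.
Qed.

Lemma nbr_count (q : pred face) f :
  ((q (nxt DX f) + q (prv DX f)) + (q (nxt DY f) + q (prv DY f))
   + (q (nxt DZ f) + q (prv DZ f)))%N = (2 * count q (nbrs f))%N.
Proof.
dface f; case: d => /=;
 [ case: (q (x, y, false)); case: (q (x + 1, y, false)); case: (q (x, y + 1, false))
 | case: (q (x, y, true)); case: (q (x - 1, y, true)); case: (q (x, y - 1, true))] => //.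
Qed.

Lemma xor_bound (q : pred face) g :
  ((q (nxt DX g) (+) q (prv DX g)) + (q (nxt DY g) (+) q (prv DY g))
   + (q (nxt DZ g) (+) q (prv DZ g)) <= 2)%N.
Proof.
dface g; case: d => /=;
 [ case: (q (x, y, false)); case: (q (x + 1, y, false)); case: (q (x, y + 1, false))
 | case: (q (x, y, true)); case: (q (x - 1, y, true)); case: (q (x, y - 1, true))] => //.
Qed.


Definition irange (lo : int) (n : nat) : seq int := [seq lo + i%:Z | i <- iota 0 n].

Lemma mem_irange lo n x : (x \in irange lo n) = (lo <= x < lo + n%:Z).
Proof.
apply/mapP/idP => [[i]|H].
  by rewrite mem_iota add0n => Hi ->; lia.
exists `|(x - lo)%R|%N; first by rewrite mem_iota add0n; lia.
lia.
Qed.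

Lemma uniq_irange lo n : uniq (irange lo n).
Proof.
rewrite map_inj_uniq ?iota_uniq // => i j H.
lia.
Qed.

Lemma size_irange lo n : size (irange lo n) = n.
Proof. by rewrite size_map size_iota. Qed.

Lemma uniq_int_bound (l : seq int) lo hi :
  uniq l -> (forall x, x \in l -> lo <= x <= hi) ->
  (size l)%:Z <= Num.max 0 (hi - lo + 1).
Proof.
move=> Hu Hb.
case: (ltP hi lo) => Hlh.
  case: l Hu Hb => [|x l] //= _ Hb; first lia.
  have := Hb x; rewrite inE eqxx => /(_ isT); lia.
have : (size l <= size (irange lo `|(hi - lo + 1)%R|%N))%N.
  apply: uniq_leq_size => // x /Hb Hx; rewrite mem_irange; lia.
rewrite size_irange; lia.
Qed.

Lemma count_keys (T : eqType) (p : pred T) (kf : T -> int) (ks : seq int) (s : seq T) :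
  uniq ks ->
  (\sum_(k <- ks) count (fun x => p x && (kf x == k)) s)%N =
  count (fun x => p x && (kf x \in ks)) s.
Proof.
elim: ks => [|k ks IH] /=; first by rewrite big_nil; elim: s => //= x s <-; case: (p x).
case/andP => Hk /IH {}IH; rewrite big_cons IH.
elim: s {IH} => //= x s IHs; rewrite -IHs inE.
case: (p x) => //=; case: eqP => [->|] //=; rewrite ?(negbTE Hk) /=; lia.
Qed.

Lemma exists_min (T : eqType) (F : T -> int) (s : seq T) :
  s != [::] -> exists2 x, x \in s & forall y, y \in s -> F x <= F y.
Proof.
elim: s => [|a s IH] //= _.
case: (eqVneq s [::]) => [->|/IH [x Hx Hmin]].
  by exists a => [|y]; rewrite ?inE // => /eqP ->.
case: (leP (F a) (F x)) => H.
  exists a; first by rewrite inE eqxx.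
  move=> y; rewrite inE => /orP [/eqP ->//|/Hmin]; lia.
exists x; first by rewrite inE Hx orbT.
move=> y; rewrite inE => /orP [/eqP ->|/Hmin]; lia.
Qed.

Lemma exists_max (T : eqType) (F : T -> int) (s : seq T) :
  s != [::] -> exists2 x, x \in s & forall y, y \in s -> F y <= F x.
Proof.
move=> /(exists_min (fun x => - F x)) [x Hx H]; exists x => // y /H; lia.
Qed.


Lemma nxt_prv K f : nxt K (prv K f) = f.
Proof. apply: (@key_pos_inj K); rewrite ?(key_nxt, key_prv, pos_nxt, pos_prv) //; lia. Qed.
Lemma prv_nxt K f : prv K (nxt K f) = f.
Proof. apply: (@key_pos_inj K); rewrite ?(key_nxt, key_prv, pos_nxt, pos_prv) //; lia. Qed.

Section Perim.
Variable P : {fset face}.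

Definition Lst := flatten [seq [seq g <- nbrs f | g \notin P] | f <- enum_fset P].

Lemma mem_Lst g f : f \in P -> g \in nbrs f -> g \notin P -> g \in Lst.
Proof.
move=> Hf Hg HgP; apply/flattenP; exists [seq g <- nbrs f | g \notin P].
  by apply/mapP; exists f.
by rewrite mem_filter HgP.
Qed.

Lemma edge_Lst : edge_perimeter P = size Lst.
Proof.
rewrite /edge_perimeter /Lst size_flatten /shape -map_comp sumnE big_map.
by apply: eq_bigr => f _ /=; rewrite size_filter.
Qed.

Lemma site_le_edge : (site_perimeter P <= edge_perimeter P)%N.
Proof. by rewrite edge_Lst /site_perimeter -/Lst size_undup. Qed.

Definition eK K g := (nxt K g \in P) (+) (prv K g \in P).

Lemma siteA (B : seq face) :
  (count (eK DX) B + count (eK DY) B + count (eK DZ) B <= 2 * size B)%N.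
Proof.
elim: B => //= g B IH.
have H : (eK DX g + eK DY g + eK DZ g <= 2)%N := xor_bound (fun h => h \in P) g.
lia.
Qed.

Lemma sum_ge2 (F : int -> nat) (ks : seq int) :
  (forall k, k \in ks -> 2 <= F k)%N -> (2 * size ks <= \sum_(k <- ks) F k)%N.
Proof.
elim: ks => [|k ks IH] H; first by rewrite big_nil.
rewrite big_cons /=.
have H1 := H k (mem_head _ _).
have H2 : (2 * size ks <= \sum_(k <- ks) F k)%N.
  by apply: IH => j Hj; apply: H; rewrite inE Hj orbT.
lia.
Qed.

Lemma siteB K :
  (2 * size (undup (map (key K) (enum_fset P))) <= count (eK K) (undup Lst))%N.
Proof.
set Ks := undup _; set Bs := undup Lst.
apply: (@leq_trans (count (fun g => eK K g && (key K g \in Ks)) Bs)); last first.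
  by apply: sub_count => g /andP [].
rewrite -count_keys ?undup_uniq //.
apply: sum_ge2 => k; rewrite mem_undup => /mapP [f0 Hf0 Hk].
set S := [seq f <- enum_fset P | key K f == k].
have HS : S != [::].
  apply/eqP => HS; have : f0 \in S by rewrite mem_filter Hf0 Hk eqxx.
  by rewrite HS.
have [fm Hfm Hmin] := exists_min (pos K) HS.
have [fM HfM Hmax] := exists_max (pos K) HS.
move: Hfm HfM; rewrite !mem_filter => /andP [/eqP Hkm Hfm] /andP [/eqP HkM HfM].
set g1 := prv K fm; set g2 := nxt K fM.
have Hg1P : g1 \notin P.
  apply/negP => Hg; have : g1 \in S by rewrite mem_filter Hg /g1 key_prv Hkm eqxx.
  move/Hmin; rewrite /g1 pos_prv; lia.
have Hg2P : g2 \notin P.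
  apply/negP => Hg; have : g2 \in S by rewrite mem_filter Hg /g2 key_nxt HkM eqxx.
  move/Hmax; rewrite /g2 pos_nxt; lia.
have Hpp : prv K g1 \notin P.
  apply/negP => Hg; have : prv K g1 \in S by rewrite mem_filter Hg /g1 !key_prv Hkm eqxx.
  move/Hmin; rewrite /g1 !pos_prv; lia.
have Hnn : nxt K g2 \notin P.
  apply/negP => Hg; have : nxt K g2 \in S by rewrite mem_filter Hg /g2 !key_nxt HkM eqxx.
  move/Hmax; rewrite /g2 !pos_nxt; lia.
have HfMS : fM \in S by rewrite mem_filter HfM HkM eqxx.
have Hle := Hmin _ HfMS.
have Hneq : g1 != g2.
  apply/eqP => Heq; have : pos K g1 = pos K g2 by rewrite Heq.
  rewrite /g1 /g2 pos_prv pos_nxt; lia.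
have He1 : eK K g1 by rewrite /eK /g1 nxt_prv Hfm (negbTE Hpp).
have He2 : eK K g2 by rewrite /eK /g2 prv_nxt HfM (negbTE Hnn).
have HB1 : g1 \in Bs by rewrite mem_undup; apply: (mem_Lst Hfm) => //; exact: prv_nbr.
have HB2 : g2 \in Bs by rewrite mem_undup; apply: (mem_Lst HfM) => //; exact: nxt_nbr.
rewrite -size_filter.
have -> : 2%N = size [:: g1; g2] by [].
apply: uniq_leq_size; first by rewrite /= inE Hneq.
move=> g; rewrite !inE => /orP [] /eqP ->; rewrite mem_filter.
  by rewrite He1 HB1 /g1 key_prv Hkm eqxx.
by rewrite He2 HB2 /g2 key_nxt HkM eqxx.
Qed.

Lemma site_ge :
  (size (undup (map (key DX) (enum_fset P))) + size (undup (map (key DY) (enum_fset P)))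
   + size (undup (map (key DZ) (enum_fset P))) <= site_perimeter P)%N.
Proof.
have := siteA (undup Lst); have := siteB DX; have := siteB DY; have := siteB DZ.
rewrite /site_perimeter -/Lst.
move=> H1 H2 H3 H4.
rewrite -(leq_pmul2l (isT : (0 < 2)%N)) !mulnDr.
apply: leq_trans H4; apply: leq_add; [apply: leq_add|] => //.
Qed.

Lemma conn_key K f g k : is_polyiamond P -> f \in P -> g \in P ->
  key K f <= k <= key K g -> k \in undup (map (key K) (enum_fset P)).
Proof.
move=> [_ Hc] Hf Hg; have [s [Hs [Hp Hl]]] := Hc f g Hf Hg.
elim: s f Hf Hs Hp Hl => [|f' s IH] f Hf /=.
  move=> _ _ Hfg Hk; rewrite mem_undup; apply/mapP; exists f => //.
  rewrite -Hfg in Hk; lia.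
case/andP => Hf' Hs /andP [Hadj Hp] Hl Hk.
have Hb := key_nbr K Hadj.
case: (eqVneq k (key K f)) => [->|Hne].
  by rewrite mem_undup; apply/mapP; exists f.
apply: (IH f') => //; lia.
Qed.

Lemma width_le K f g : is_polyiamond P -> f \in P -> g \in P -> key K f <= key K g ->
  key K g - key K f + 1 <= (size (undup (map (key K) (enum_fset P))))%:Z.
Proof.
move=> HP Hf Hg Hfg.
have : (size (irange (key K f) `|(key K g - key K f + 1)%R|%N) <=
        size (undup (map (key K) (enum_fset P))))%N.
  apply: uniq_leq_size; first exact: uniq_irange.
  move=> k; rewrite mem_irange => Hk; apply: (conn_key HP Hf Hg); lia.
rewrite size_irange; lia.
Qed.

End Perim.


Record box := Box { bx0 : int; bx1 : int; by0 : int; by1 : int; bz0 : int; bz1 : int }.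

Definition inBox (B : box) (f : face) : bool :=
  [&& bx0 B <= fx f, fx f <= bx1 B, by0 B <= fy f, fy f <= by1 B,
      bz0 B <= fz f & fz f <= bz1 B].

Definition lo B y := Num.max (2 * bx0 B) (2 * (bz0 B - y) - 1).
Definition hi B y := Num.min (2 * bx1 B + 1) (2 * (bz1 B - y)).
Definition rowZ B y := Num.max 0 (hi B y - lo B y + 1).
Definition nrows B := `|(Num.max 0 (by1 B - by0 B + 1))%R|%N.
Definition rowsum B := \sum_(y <- irange (by0 B) (nrows B)) rowZ B y.

Lemma inBox_row B f : inBox B f =
  [&& by0 B <= fy f, fy f <= by1 B, lo B (fy f) <= pos DY f & pos DY f <= hi B (fy f)].
Proof.
dface f; rewrite /inBox /lo /hi /pos /fz /fx /fy /fd /=; case: d; lia.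
Qed.

Definition face_at (y t : int) : face := ((t %/ 2)%Z, y, (t %% 2)%Z == 1).

Lemma face_at_y y t : fy (face_at y t) = y.
Proof. by []. Qed.
Lemma face_at_pos y t : pos DY (face_at y t) = t.
Proof. rewrite /pos /face_at /fx /fd /=; case: eqP; lia. Qed.

Lemma PoszSum (T : Type) (l : seq T) (F : T -> nat) :
  Posz (\sum_(y <- l) F y)%N = \sum_(y <- l) Posz (F y).
Proof. elim: l => [|a l IH]; first by rewrite !big_nil. by rewrite !big_cons PoszD IH. Qed.

Lemma ler_sum_in (T : eqType) (l : seq T) (a b : T -> int) :
  (forall y, y \in l -> a y <= b y) -> \sum_(y <- l) a y <= \sum_(y <- l) b y.
Proof. by move=> H; rewrite big_seq [X in _ <= X]big_seq; apply: ler_sum. Qed.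

Lemma sum_eq_le (T : eqType) (l : seq T) (a b : T -> int) :
  (forall y, y \in l -> a y <= b y) -> \sum_(y <- l) b y <= \sum_(y <- l) a y ->
  forall y, y \in l -> a y = b y.
Proof.
elim: l => [|z l IH] H Hs y //.
rewrite !big_cons in Hs.
have Hz := H z (mem_head _ _).
have Hl : forall y, y \in l -> a y <= b y by move=> w Hw; apply: H; rewrite inE Hw orbT.
have Hsl : \sum_(y <- l) a y <= \sum_(y <- l) b y by apply: ler_sum_in => w Hw; apply: Hl.
set SA := \sum_(_ <- l) a _ in Hs Hsl; set SB := \sum_(_ <- l) b _ in Hs Hsl.
rewrite inE => /orP [/eqP ->|Hy]; first lia.
apply: IH; [exact: Hl|rewrite -/SA -/SB; lia|exact: Hy].
Qed.

Section Rows.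
Variable B : box.
Variable s : seq face.
Hypothesis Hu : uniq s.

Definition cnt y := count (fun f => fy f == y) s.

Lemma size_cnt : (forall f, f \in s -> inBox B f) ->
  (size s)%:Z = \sum_(y <- irange (by0 B) (nrows B)) (cnt y)%:Z.
Proof.
move=> Hb; rewrite -PoszSum.
have := count_keys predT fy s (uniq_irange (by0 B) (nrows B)).
rewrite /cnt /= => ->; congr Posz.
rewrite -size_filter; congr size; symmetry; apply/all_filterP/allP => f /Hb.
rewrite /inBox mem_irange /nrows; lia.
Qed.

Lemma cnt_le y : (forall f, f \in s -> inBox B f) -> (cnt y)%:Z <= rowZ B y.
Proof.
move=> Hb; rewrite /cnt -size_filter -(size_map (pos DY)) /rowZ.
apply: uniq_int_bound.
  rewrite map_inj_in_uniq ?filter_uniq // => f g.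
  rewrite !mem_filter => /andP [/eqP Hf _] /andP [/eqP Hg _] Hp.
  by apply: (@key_pos_inj DY) => //=; rewrite Hf Hg.
move=> t /mapP [f]; rewrite mem_filter => /andP [/eqP Hf /Hb] + ->.
rewrite inBox_row Hf; lia.
Qed.

Lemma cnt_ge y : (forall f, (f \in s) = inBox B f) ->
  by0 B <= y <= by1 B -> rowZ B y <= (cnt y)%:Z.
Proof.
move=> Hb Hy; rewrite /rowZ.
case: (ltP (hi B y - lo B y + 1) 0) => H; first by lia.
set n := `|(hi B y - lo B y + 1)%R|%N.
have : (size (map (face_at y) (irange (lo B y) n)) <= cnt y)%N.
  rewrite /cnt -size_filter; apply: uniq_leq_size.
    rewrite map_inj_uniq ?uniq_irange // => t t' Ht.
    by rewrite -(face_at_pos y t) -(face_at_pos y t') Ht.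
  move=> g /mapP [t]; rewrite mem_irange => Ht ->.
  rewrite mem_filter face_at_y eqxx Hb inBox_row face_at_y face_at_pos /=.
  rewrite /n in Ht; lia.
rewrite size_map size_irange /n; lia.
Qed.

Lemma row_le : (forall f, f \in s -> inBox B f) -> (size s)%:Z <= rowsum B.
Proof.
move=> Hb; rewrite size_cnt // /rowsum.
by apply: ler_sum_in => y _; apply: cnt_le.
Qed.

Lemma row_exact : (forall f, (f \in s) = inBox B f) -> (size s)%:Z = rowsum B.
Proof.
move=> Hb.
have Hb' : forall f, f \in s -> inBox B f by move=> f; rewrite Hb.
apply/eqP; rewrite eq_le row_le //= size_cnt // /rowsum.
apply: ler_sum_in => y; rewrite mem_irange /nrows => Hy.
apply: cnt_ge => //; lia.
Qed.

Lemma row_fill : (forall f, f \in s -> inBox B f) -> rowsum B <= (size s)%:Z ->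
  forall g, inBox B g -> g \in s.
Proof.
move=> Hb Hs g Hg.
have Hy : fy g \in irange (by0 B) (nrows B).
  rewrite mem_irange /nrows; move: Hg; rewrite /inBox; lia.
have Heq := @sum_eq_le _ _ (fun y => (cnt y)%:Z) (rowZ B)
  (fun y _ => cnt_le y Hb) _ _ Hy.
move: Hs; rewrite size_cnt // => /Heq {}Heq.
move: Heq; rewrite /rowZ /cnt -size_filter -(size_map (pos DY)) => Heq.
move: Hg; rewrite inBox_row => /and4P [_ _ Hlo Hhi].
set l := map _ _ in Heq.
have Hul : uniq l.
  rewrite map_inj_in_uniq ?filter_uniq // => f h.
  rewrite !mem_filter => /andP [/eqP Hf _] /andP [/eqP Hh _] Hp.
  by apply: (@key_pos_inj DY) => //=; rewrite Hf Hh.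
have Hsub : {subset l <= irange (lo B (fy g)) `|(hi B (fy g) - lo B (fy g) + 1)%R|%N}.
  move=> t /mapP [f]; rewrite mem_filter => /andP [/eqP Hf /Hb] + ->.
  rewrite inBox_row Hf mem_irange; lia.
have [_ Hperm] := uniq_min_size Hul Hsub (ltac:(rewrite size_irange; have Hx : (size l)%:Z = Num.max 0 (hi B (fy g) - lo B (fy g) + 1) := Heq; clear Heq; move: (size l) (hi B (fy g)) (lo B (fy g)) (pos DY g) Hx Hlo Hhi; clear; move=> n a b c; lia)).
have : pos DY g \in l by rewrite Hperm mem_irange; lia.
case/mapP => f; rewrite mem_filter => /andP [/eqP Hf Hfs] Hp.
suff -> : g = f by [].
by apply: (@key_pos_inj DY) => //=; rewrite Hf.
Qed.

End Rows.


Definition Td B := bz1 B - bx0 B - by0 B + 1.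
Definition Ta B := bz0 B - bx0 B - by0 B.
Definition Tb B := bz1 B - by0 B - bx1 B.
Definition Tc B := bz1 B - bx0 B - by1 B.
Definition valid B := [&& 0 <= Ta B, 0 <= Tb B, 0 <= Tc B, Ta B + Tb B <= Td B,
  Tb B + Tc B <= Td B & Ta B + Tc B <= Td B].
Definition NB B := Td B * Td B - Ta B * Ta B - Tb B * Tb B - Tc B * Tc B.
Definition wsum B := (bx1 B - bx0 B + 1) + (by1 B - by0 B + 1) + (bz1 B - bz0 B + 1).

Definition Gf (m d a b : int) :=
  m * (2 * d - 1) - (if m <= b then 2 * m * b else b * b + b + m * m - m)
  + (if m <= b then m else b) - (if m <= a then 2 * a * m - m * m else a * a).

Lemma irangeS lo k : irange lo k.+1 = irange lo k ++ [:: lo + k%:Z].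
Proof. by rewrite /irange -addn1 iotaD map_cat. Qed.

Lemma rowsum_closed B : valid B -> rowsum B = NB B.
Proof.
case: B => x0 x1 y0 y1 z0 z1; rewrite /valid /NB /rowsum /nrows /Td /Ta /Tb /Tc /=.
set d := z1 - x0 - y0 + 1; set a := z0 - x0 - y0; set b := z1 - y0 - x1;
  set c := z1 - x0 - y1.
move=> Hv.
have Hd : d = z1 - x0 - y0 + 1 by []. have Ha : a = z0 - x0 - y0 by [].
have Hb : b = z1 - y0 - x1 by []. have Hc : c = z1 - x0 - y1 by [].
clearbody d a b c.
set B := Box x0 x1 y0 y1 z0 z1.
have step : forall k : nat, (k%:Z <= d - c) ->
   \sum_(y <- irange y0 k) rowZ B y = Gf k%:Z d a b.
  elim=> [|k IH] Hk.
    by rewrite big_nil /Gf /=; case: (leP 0 a); case: (leP 0 b) => /= *; lia.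
  rewrite irangeS big_cat big_seq1 IH; last by lia.
  rewrite /rowZ /lo /hi /B /= /Gf.
  have Hm : k%:Z + 1 <= d - c by lia.
  have -> : Posz k.+1 = k%:Z + 1 by lia.
  have Hm0 : 0 <= k%:Z by lia.
  clear IH Hk; move: (k%:Z) Hm Hm0 => m Hm Hm0.
  case: (leP (m + 1) b) => H1; case: (leP m b) => H2;
  case: (leP (m + 1) a) => H3; case: (leP m a) => H4; try lia;
  try (have E : m = a by lia); try (have E2 : m = b by lia); subst m; try lia.
have Hn : `|(Num.max 0 (y1 - y0 + 1))%R|%N%:Z = d - c by lia.
rewrite step; last by lia.
rewrite Hn /Gf.
have Hnb : b <= d - c by lia. have Hna : a <= d - c by lia.
set n := d - c. have Hcn : c = d - n by rewrite /n; lia.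
clearbody n; subst c.
case: (leP n b) => H1; case: (leP n a) => H2.
- have E1 : b = n by lia. have E2 : a = n by lia. subst a b; nia.
- have E1 : b = n by lia. subst b; nia.
- have E2 : a = n by lia. subst a; nia.
- nia.
Qed.


Definition rotB B := Box (bz0 B) (bz1 B) (- bx1 B - 1) (- bx0 B - 1) (by0 B) (by1 B).
Definition reflB B := Box (by0 B) (by1 B) (bx0 B) (bx1 B) (bz0 B) (bz1 B).
Definition translB tx ty B := Box (bx0 B - tx) (bx1 B - tx) (by0 B - ty) (by1 B - ty)
  (bz0 B - tx - ty) (bz1 B - tx - ty).
Definition symB k (s : bool) tx ty B :=
  iter k rotB ((if s then reflB else id) (translB tx ty B)).

Ltac unf := rewrite /inBox /rotB /reflB /translB /fz /fx /fy /fd /=.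

Lemma inBox_rot B f : inBox B (rot60 f) = inBox (rotB B) f.
Proof. dface f; case: B => *; case: d; unf; lia. Qed.
Lemma inBox_refl B f : inBox B (refl f) = inBox (reflB B) f.
Proof. dface f; case: B => *; case: d; unf; lia. Qed.
Lemma inBox_transl B tx ty f : inBox B (transl tx ty f) = inBox (translB tx ty B) f.
Proof. dface f; case: B => *; case: d; unf; lia. Qed.

Lemma inBox_iter k B f : inBox B (iter k rot60 f) = inBox (iter k rotB B) f.
Proof.
elim: k B => [|k IH] B //=.
by rewrite inBox_rot IH -iterS iterSr.
Qed.

Lemma inBox_sym k s tx ty B f :
  inBox B (lat_sym k s tx ty f) = inBox (symB k s tx ty B) f.
Proof.
rewrite /lat_sym /symB inBox_transl -inBox_iter.
by case: s => //=; rewrite inBox_refl.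
Qed.

Definition TB (d a b c : int) := Box 0 (d - b - 1) 0 (d - c - 1) a (d - 1).

Lemma inT_box d a b c f : inT d a b c f = inBox (TB d a b c) f.
Proof. dface f; case: d0; rewrite /inT /TB; unf; lia. Qed.

Definition Bbase (r : int) (i : nat) : box :=
  match i with
  | 0 => TB (3 * r) r r r
  | 1 => TB (3 * r) (r - 1) r r
  | 2 => TB (3 * r + 1) r r (r + 1)
  | 3 => TB (3 * r + 1) r r r
  | 4 => TB (3 * r + 2) r (r + 1) (r + 1)
  | _ => TB (3 * r + 2) r r (r + 1)
  end.

Lemma inQbase_box r i f : inQbase r i f = inBox (Bbase r i) f.
Proof. by case: i => [|[|[|[|[|i]]]]]; rewrite /inQbase /Bbase inT_box. Qed.

Definition Dmin (i : nat) : int :=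
  match i with 0 => 0 | 1 => 7 | 2 => 4 | 3 => 3 | 4 => 4 | _ => 7 end.

Lemma base_facts r i : 1 <= r -> (i < 6)%N ->
  [/\ valid (Bbase r i), wsum (Bbase r i) = 6 * r + i%:Z &
      6 * NB (Bbase r i) = (6 * r + i%:Z) * (6 * r + i%:Z) - Dmin i].
Proof.
move=> Hr; case: i => [|[|[|[|[|[|i]]]]]] // _;
rewrite /Bbase /TB /valid /wsum /NB /Td /Ta /Tb /Tc /Dmin /=; split; lia.
Qed.

Lemma rot_inv B : [/\ valid (rotB B) = valid B, NB (rotB B) = NB B & wsum (rotB B) = wsum B].
Proof.
case: B => x0 x1 y0 y1 z0 z1; rewrite /valid /NB /wsum /rotB /Td /Ta /Tb /Tc /=.
split; [lia|nia|lia].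
Qed.
Lemma refl_inv B : [/\ valid (reflB B) = valid B, NB (reflB B) = NB B & wsum (reflB B) = wsum B].
Proof.
case: B => x0 x1 y0 y1 z0 z1; rewrite /valid /NB /wsum /reflB /Td /Ta /Tb /Tc /=.
split; [lia|nia|lia].
Qed.
Lemma transl_inv tx ty B :
  [/\ valid (translB tx ty B) = valid B, NB (translB tx ty B) = NB B &
      wsum (translB tx ty B) = wsum B].
Proof.
case: B => x0 x1 y0 y1 z0 z1; rewrite /valid /NB /wsum /translB /Td /Ta /Tb /Tc /=.
split; [lia|nia|lia].
Qed.

Lemma sym_inv k s tx ty B :
  [/\ valid (symB k s tx ty B) = valid B, NB (symB k s tx ty B) = NB B &
      wsum (symB k s tx ty B) = wsum B].
Proof.
rewrite /symB; elim: k => [|k [IH1 IH2 IH3]] /=.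
  case: s => /=; have [T1 T2 T3] := transl_inv tx ty B; last by [].
  by have [R1 R2 R3] := refl_inv (translB tx ty B); rewrite R1 R2 R3.
by have [R1 R2 R3] := rot_inv (iter k rotB ((if s then reflB else id) (translB tx ty B)));
  rewrite R1 R2 R3.
Qed.

Lemma box_eq x0 x1 y0 y1 z0 z1 x0' x1' y0' y1' z0' z1' :
  x0 = x0' -> x1 = x1' -> y0 = y0' -> y1 = y1' -> z0 = z0' -> z1 = z1' ->
  Box x0 x1 y0 y1 z0 z1 = Box x0' x1' y0' y1' z0' z1'.
Proof. by move=> -> -> -> -> -> ->. Qed.

Lemma sym_transl k s B u v : exists tx ty,
  symB k s tx ty B = translB u v (symB k s 0 0 B).
Proof.
rewrite /symB; elim: k u v => [|k IH] u v /=.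
  case: s; [exists v, u|exists u, v]; case: B => *;
    rewrite /reflB /translB /=; apply: box_eq; lia.
have [tx [ty E]] := IH (- v) (u + v).
exists tx, ty; rewrite E.
case: (iter _ _ _) => *; rewrite /rotB /translB /=; apply: box_eq; lia.
Qed.

Lemma QR_of_box (P : {fset face}) Bp r i k s :
  (forall f, (f \in P) = inBox Bp f) -> 1 <= r -> (i < 6)%N -> (k < 6)%N ->
  let S := symB k s 0 0 (Bbase r i) in
  [/\ bx1 Bp - bx0 Bp = bx1 S - bx0 S, by1 Bp - by0 Bp = by1 S - by0 S,
      bz0 Bp - bx0 Bp - by0 Bp = bz0 S - bx0 S - by0 S &
      bz1 Bp - bx0 Bp - by0 Bp = bz1 S - bx0 S - by0 S] ->
  is_QR P.
Proof.
move=> HP Hr Hi Hk S [E1 E2 E3 E4].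
have [tx [ty Ht]] := sym_transl k s (Bbase r i) (bx0 S - bx0 Bp) (by0 S - by0 Bp).
exists r, i, k, s, tx, ty; do 3 (split; first by []); move=> f.
rewrite HP inQbase_box inBox_sym Ht -/S.
suff -> : translB (bx0 S - bx0 Bp) (by0 S - by0 Bp) S = Bp by [].
clear Ht HP; move: E1 E2 E3 E4; rewrite /translB.
case: S => a1 a2 a3 a4 a5 a6; case: Bp => b1 b2 b3 b4 b5 b6 /= E1 E2 E3 E4.
apply: box_eq; lia.
Qed.


Definition klo K B := match K with DX => bx0 B | DY => by0 B | DZ => bz0 B end.
Definition khi K B := match K with DX => bx1 B | DY => by1 B | DZ => bz1 B end.

Lemma key_range K B f : inBox B f -> klo K B <= key K f <= khi K B.
Proof. case: K; rewrite /inBox /=; lia. Qed.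

Lemma box_conv K B f g : inBox B f -> inBox B g -> key K f = key K g ->
  pos K f < pos K g -> inBox B (nxt K f) && inBox B (prv K g).
Proof.
dface f; dface g; case: B => a0 a1 b0 b1 c0 c1; case: K; case: d; case: d0;
  rewrite /inBox /key /pos /fz /fx /fy /fd /=; lia.
Qed.

Lemma count_nbr_sum (q : pred face) (s : seq face) :
  (2 * \sum_(f <- s) count q (nbrs f) =
   (count (fun f => q (nxt DX f)) s + count (fun f => q (prv DX f)) s) +
   (count (fun f => q (nxt DY f)) s + count (fun f => q (prv DY f)) s) +
   (count (fun f => q (nxt DZ f)) s + count (fun f => q (prv DZ f)) s))%N.
Proof.
elim: s => [|f s IH]; first by rewrite big_nil.
rewrite big_cons mulnDr IH -nbr_count /=; lia.
Qed.

Section BoxPerim.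
Variable F : {fset face}.
Variable W : box.
Hypothesis HF : forall f, (f \in F) = inBox W f.

Lemma count_nxt K :
  (count (fun f => nxt K f \notin F) (enum_fset F))%:Z <= Num.max 0 (khi K W - klo K W + 1).
Proof.
rewrite -size_filter -(size_map (key K)); apply: uniq_int_bound.
  rewrite map_inj_in_uniq ?filter_uniq ?fset_uniq // => f g.
  rewrite !mem_filter => /andP [Hf HfF] /andP [Hg HgF] Hk.
  have HfB : inBox W f by rewrite -HF.
  have HgB : inBox W g by rewrite -HF.
  case: (ltgtP (pos K f) (pos K g)) => Hp.
  - by have /andP [H1 _] := box_conv HfB HgB Hk Hp; move: Hf; rewrite HF H1.
  - by have /andP [H1 _] := box_conv HgB HfB (esym Hk) Hp; move: Hg; rewrite HF H1.
  - exact: key_pos_inj Hk Hp.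
move=> k /mapP [f]; rewrite mem_filter => /andP [_ Hf] ->.
by apply: key_range; rewrite -HF.
Qed.

Lemma count_prv K :
  (count (fun f => prv K f \notin F) (enum_fset F))%:Z <= Num.max 0 (khi K W - klo K W + 1).
Proof.
rewrite -size_filter -(size_map (key K)); apply: uniq_int_bound.
  rewrite map_inj_in_uniq ?filter_uniq ?fset_uniq // => f g.
  rewrite !mem_filter => /andP [Hf HfF] /andP [Hg HgF] Hk.
  have HfB : inBox W f by rewrite -HF.
  have HgB : inBox W g by rewrite -HF.
  case: (ltgtP (pos K f) (pos K g)) => Hp.
  - by have /andP [_ H1] := box_conv HfB HgB Hk Hp; move: Hg; rewrite HF H1.
  - by have /andP [_ H1] := box_conv HgB HfB (esym Hk) Hp; move: Hf; rewrite HF H1.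
  - exact: key_pos_inj Hk Hp.
move=> k /mapP [f]; rewrite mem_filter => /andP [_ Hf] ->.
by apply: key_range; rewrite -HF.
Qed.

Lemma box_perim : valid W -> (edge_perimeter F)%:Z <= wsum W.
Proof.
move=> Hv.
have E := count_nbr_sum (fun g => g \notin F) (enum_fset F).
rewrite -/(edge_perimeter F) in E; simpl in E.
have := count_nxt DX; have := count_prv DX; have := count_nxt DY;
have := count_prv DY; have := count_nxt DZ; have := count_prv DZ.
move: Hv; rewrite /valid /wsum /Td /Ta /Tb /Tc /=.
move: E; set e := edge_perimeter F.
move: (count _ _) => a1; move: (count _ _) => a2; move: (count _ _) => a3.
move: (count _ _) => a4; move: (count _ _) => a5; move: (count _ _) => a6.
lia.
Qed.

End BoxPerim.


Lemma fz_def f : fz f = fx f + fy f + fd f /\ 0 <= fd f <= 1.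
Proof. rewrite /fz /fd; case: (f.2); lia. Qed.

Lemma pbox (P : {fset face}) : is_polyiamond P -> exists Bp,
  [/\ forall f, f \in P -> inBox Bp f, valid Bp & wsum Bp <= (site_perimeter P)%:Z].
Proof.
move=> HP; have Hne : enum_fset P != [::].
  case: HP => /eqP HP0 _; apply/eqP => H; apply: HP0; apply/fsetP => f.
  by rewrite inE; apply/negbTE; rewrite -[f \in P]/(f \in enum_fset P) H.
have [mX HmX HminX] := exists_min (key DX) Hne.
have [MX HMX HmaxX] := exists_max (key DX) Hne.
have [mY HmY HminY] := exists_min (key DY) Hne.
have [MY HMY HmaxY] := exists_max (key DY) Hne.
have [mZ HmZ HminZ] := exists_min (key DZ) Hne.
have [MZ HMZ HmaxZ] := exists_max (key DZ) Hne.
set Bp := Box (fx mX) (fx MX) (fy mY) (fy MY) (fz mZ) (fz MZ).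
have HB : forall f, f \in P -> inBox Bp f.
  move=> f Hf; rewrite /inBox /=.
  have := HminX f Hf; have := HmaxX f Hf; have := HminY f Hf; have := HmaxY f Hf;
  have := HminZ f Hf; have := HmaxZ f Hf; rewrite /key; lia.
exists Bp; split => //.
  have := HB _ HmX; have := HB _ HMX; have := HB _ HmY; have := HB _ HMY;
  have := HB _ HmZ; have := HB _ HMZ.
  have := fz_def mX; have := fz_def MX; have := fz_def mY; have := fz_def MY;
  have := fz_def mZ; have := fz_def MZ.
  rewrite /valid /inBox /Td /Ta /Tb /Tc /=; lia.
have W1 := width_le (K:=DX) HP HmX HMX (HminX _ HMX).
have W2 := width_le (K:=DY) HP HmY HMY (HminY _ HMY).
have W3 := width_le (K:=DZ) HP HmZ HMZ (HminZ _ HMZ).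
have S := site_ge P.
rewrite /wsum /=; move: W1 W2 W3 S; rewrite /key.
move: (size _) (size _) (size _) => n1 n2 n3; lia.
Qed.


Lemma num1 (h q nP nW D Dm : int) : 0 <= h -> h <= q -> 6 <= q -> 0 <= D -> Dm <= 7 ->
  6 * nP + D = h * h -> 6 * nW + Dm = q * q -> nW <= nP -> h = q.
Proof.
move=> H0 H1 H2 H3 H4 H5 H6 H7.
case: (ltP h q) => H; last lia.
have : h * h <= (q - 1) * (q - 1) by nia.
nia.
Qed.

Lemma sq3 (x : int) : x * x <= 3 -> x = -1 \/ x = 0 \/ x = 1.
Proof. move=> H; have : -1 <= x <= 1 by nia. lia. Qed.

Lemma num2 (e u v : int) : 3 * (e * e) + 2 * (u * u + v * v + (u + v) * (u + v)) <= 7 ->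
  (e = -1 \/ e = 0 \/ e = 1) /\ (u = -1 \/ u = 0 \/ u = 1) /\ (v = -1 \/ v = 0 \/ v = 1).
Proof.
move=> H; split; [|split]; apply: sq3; nia.
Qed.

Lemma Dident (d a b c nP e u v : int) : nP = d * d - a * a - b * b - c * c ->
  e = a + b + c - d -> u = a - b -> v = b - c ->
  6 * nP + (3 * (e * e) + 2 * (u * u + v * v + (u + v) * (u + v))) =
  (3 * d - a - b - c) * (3 * d - a - b - c).
Proof. move=> -> -> -> ->; lia. Qed.

Lemma Dnn (e u v : int) : 0 <= 3 * (e * e) + 2 * (u * u + v * v + (u + v) * (u + v)).
Proof. nia. Qed.



Ltac tmpl c0 ib kb sb :=
  match goal with
  | HnQ : ~ is_QR ?P, Hfill : context [inBox ?Bp] |- _ =>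
    let HH := fresh "HH" in
    have HH := @QR_of_box P Bp (Ta Bp + c0) ib kb sb (Hfill ltac:(lia));
    apply: HnQ; apply: HH;
    [rewrite /Ta /=; lia | by [] | by [] |
     rewrite /symB /Bbase /TB /rotB /reflB /translB /Ta /=; split; lia]
  end.

Theorem lemma7p5 (E P : {fset face}) :
  is_QR E -> is_polyiamond P -> ~ is_QR P -> (area E <= area P)%N ->
  (edge_perimeter E < edge_perimeter P)%N /\
  (site_perimeter E < site_perimeter P)%N.
Proof.
move=> [r [i [k [s [tx [ty [Hr [Hi [Hk HE]]]]]]]]] HP HnQ Harea.
have HEW : forall f, (f \in E) = inBox (symB k s tx ty (Bbase r i)) f.
  by move=> f; rewrite HE inQbase_box inBox_sym.
have [Wv WN Ww] := sym_inv k s tx ty (Bbase r i).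
have [Bv Bw BN] := base_facts Hr Hi.
have HvW : valid (symB k s tx ty (Bbase r i)) by rewrite Wv.
have HareaE : (area E)%:Z = NB (symB k s tx ty (Bbase r i)).
  by rewrite /area (row_exact (fset_uniq E) HEW) rowsum_closed.
have HpE := box_perim HEW HvW.
have HsE := site_le_edge E.
have [Bp [HPB HvP HwP]] := pbox HP.
have HareaP : (area P)%:Z <= NB Bp.
  by rewrite -rowsum_closed //; apply: row_le (fset_uniq P) HPB.
have HsP := site_le_edge P.
have Hfill : NB Bp <= (area P)%:Z -> forall f, (f \in P) = inBox Bp f.
  move=> H f; apply/idP/idP; first exact: HPB.
  by apply: (row_fill (fset_uniq P) HPB); rewrite rowsum_closed.
case: (ltP (6 * r + i%:Z) (wsum Bp)) => Hle.
  rewrite Ww Bw in HpE; split; lia.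
exfalso.
have HDm : Dmin i <= 7 by case: (i) => [|[|[|[|[|[|?]]]]]].
move: (NB (symB k s tx ty (Bbase r i))) WN HareaE => nW WN HareaE.
rewrite WN in HareaE.
have HnW : 6 * nW + Dmin i = (6 * r + i%:Z) * (6 * r + i%:Z) by rewrite WN BN; lia.
have HaEP : nW <= NB Bp by lia.
set q := 6 * r + i%:Z in Hle HnW.
have Hq : q = 6 * r + i%:Z by [].
clearbody q.
clear HPB; move: HvP Hfill HareaP HwP Hle HaEP; case: Bp => x0 x1 y0 y1 z0 z1.
rewrite /valid /NB /wsum /Td /Ta /Tb /Tc /=.
set d := z1 - x0 - y0 + 1; set a := z0 - x0 - y0; set b := z1 - y0 - x1;
  set c := z1 - x0 - y1.
have Hd : d = z1 - x0 - y0 + 1 by []. have Ha : a = z0 - x0 - y0 by [].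
have Hb : b = z1 - y0 - x1 by []. have Hc : c = z1 - x0 - y1 by [].
clearbody d a b c.
move=> HvP Hfill HareaP HwP Hle HaEP.
set nP := d * d - a * a - b * b - c * c in Hfill HareaP HaEP.
have HnP : nP = d * d - a * a - b * b - c * c by [].
clearbody nP.
set e := a + b + c - d. have He0 : e = a + b + c - d by [].
set u := a - b. have Hu0 : u = a - b by [].
set v := b - c. have Hv0 : v = b - c by [].
clearbody e u v.
have HD := Dident HnP He0 Hu0 Hv0.
have HDnn := Dnn e u v.
have Hh0 : 0 <= 3 * d - a - b - c by lia.
have Hhq : 3 * d - a - b - c <= q by lia.
have Hq6 : 6 <= q by lia.
have Hh : 3 * d - a - b - c = q := num1 Hh0 Hhq Hq6 HDnn HDm HD HnW HaEP.
rewrite Hh in HD.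
have HDle : 3 * (e * e) + 2 * (u * u + v * v + (u + v) * (u + v)) <= 7 by lia.
have [He [Hu Hv]] := num2 HDle.
clear HE HEW Wv Ww Bv Bw BN HvW HpE HsE HsP HP Hh0 Hhq Hq6 HDnn.
move: He0 Hu0 Hv0 HD HDle.
case: He => [->|[->|->]]; case: Hu => [->|[->|->]]; case: Hv => [->|[->|->]];
  move=> He0 Hu0 Hv0 HD HDle.
- lia.
- case: (i) Hi Hq HnW => [|[|[|[|[|[|?]]]]]] //= _ Hq HnW; first [lia | tmpl (Posz 1%N) 1%N 0%N false].
- case: (i) Hi Hq HnW => [|[|[|[|[|[|?]]]]]] //= _ Hq HnW; first [lia | tmpl (Posz 0%N) 5%N 0%N true].
- case: (i) Hi Hq HnW => [|[|[|[|[|[|?]]]]]] //= _ Hq HnW; first [lia | tmpl (Posz 0%N) 5%N 0%N false].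
- case: (i) Hi Hq HnW => [|[|[|[|[|[|?]]]]]] //= _ Hq HnW; first [lia | tmpl (Posz 0%N) 3%N 0%N false].
- case: (i) Hi Hq HnW => [|[|[|[|[|[|?]]]]]] //= _ Hq HnW; first [lia | tmpl (Posz 0%N) 1%N 2%N false].
- case: (i) Hi Hq HnW => [|[|[|[|[|[|?]]]]]] //= _ Hq HnW; first [lia | tmpl (Posz 0%N) 1%N 4%N false].
- case: (i) Hi Hq HnW => [|[|[|[|[|[|?]]]]]] //= _ Hq HnW; first [lia | tmpl (- Posz 1%N) 5%N 2%N true].
- lia.
- lia.
- case: (i) Hi Hq HnW => [|[|[|[|[|[|?]]]]]] //= _ Hq HnW; first [lia | tmpl (Posz 0%N) 4%N 0%N false].
- case: (i) Hi Hq HnW => [|[|[|[|[|[|?]]]]]] //= _ Hq HnW; first [lia | tmpl (Posz 0%N) 2%N 0%N true].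
- case: (i) Hi Hq HnW => [|[|[|[|[|[|?]]]]]] //= _ Hq HnW; first [lia | tmpl (Posz 0%N) 2%N 0%N false].
- case: (i) Hi Hq HnW => [|[|[|[|[|[|?]]]]]] //= _ Hq HnW; first [lia | tmpl (Posz 0%N) 0%N 0%N false].
- case: (i) Hi Hq HnW => [|[|[|[|[|[|?]]]]]] //= _ Hq HnW; first [lia | tmpl (- Posz 1%N) 4%N 2%N false].
- case: (i) Hi Hq HnW => [|[|[|[|[|[|?]]]]]] //= _ Hq HnW; first [lia | tmpl (- Posz 1%N) 4%N 1%N false].
- case: (i) Hi Hq HnW => [|[|[|[|[|[|?]]]]]] //= _ Hq HnW; first [lia | tmpl (- Posz 1%N) 2%N 1%N false].
- lia.
- lia.
- case: (i) Hi Hq HnW => [|[|[|[|[|[|?]]]]]] //= _ Hq HnW; first [lia | tmpl (Posz 0%N) 1%N 3%N false].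
- case: (i) Hi Hq HnW => [|[|[|[|[|[|?]]]]]] //= _ Hq HnW; first [lia | tmpl (- Posz 1%N) 5%N 3%N true].
- case: (i) Hi Hq HnW => [|[|[|[|[|[|?]]]]]] //= _ Hq HnW; first [lia | tmpl (- Posz 1%N) 5%N 1%N true].
- case: (i) Hi Hq HnW => [|[|[|[|[|[|?]]]]]] //= _ Hq HnW; first [lia | tmpl (- Posz 1%N) 3%N 1%N false].
- case: (i) Hi Hq HnW => [|[|[|[|[|[|?]]]]]] //= _ Hq HnW; first [lia | tmpl (- Posz 1%N) 1%N 5%N false].
- case: (i) Hi Hq HnW => [|[|[|[|[|[|?]]]]]] //= _ Hq HnW; first [lia | tmpl (- Posz 1%N) 1%N 1%N false].
- case: (i) Hi Hq HnW => [|[|[|[|[|[|?]]]]]] //= _ Hq HnW; first [lia | tmpl (- Posz 2%N) 5%N 1%N false].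
- lia.
Qed.
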